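(* Let $\mathcal{Q}$ be a poset and $\mathfrak A,\mathfrak X$ algebras on $\mathcal{Q}$. The following are equivalent: 1. for every finitely $\mathfrak X$-encoded persistence module $M$ over $\mathcal{Q}$, the Hilbert function $q\mapsto\dim M(q)$ is $\mathfrak A$-measurable; 2. every upset $U\subseteq\mathcal{Q}$ with $U\in\mathfrak X$ belongs to $\mathfrak A$, equivalently $\mathfrak X_{\mathrm{Up}}\subseteq\mathfrak A$. Moreover, the implication (2)$\Rightarrow$(1) remains valid when $\mathrm{Vect}$ is replaced by any abelian category $\mathcal{A}$ and the Hilbert function by $q\mapsto\alpha(A(q))$ for any amplitude $\alpha$ on $\mathcal{A}$, for every finitely $\mathfrak X$-encoded object $A$ of $\mathcal{A}^{\mathcal{Q}}$.
   Context: $\mathrm{Vect}$ is the category of finite-dimensional vector spaces over a field; a persistence module over $\mathcal{Q}$ is a functor $\mathcal{Q}\to\mathrm{Vect}$. An algebra on a set is a family of subsets containing $\emptyset$, closed under complements and finite unions. An upset $U$ satisfies $u\in U,u\le q\Rightarrow q\in U$. $\mathfrak X_{\mathrm{Up}}$ is the algebra generated by the upsets belonging to $\mathfrak X$. An object $A$ of a functor category $\mathcal{C}^{\mathcal{Q}}$ is finitely $\mathfrak X$-encoded if there are a finite poset $\mathcal P$, an order-preserving map $e\colon\mathcal{Q}\to\mathcal P$ with every fiber $e^{-1}(p)\in\mathfrak X$, an object $A'\in\mathcal{C}^{\mathcal P}$ (pointwise finite-dimensional when $\mathcal{C}=\mathrm{Vect}$) and an isomorphism $A\cong A'\circ e$.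 A function $g\colon\mathcal{Q}\to[0,\infty]$ is $\mathfrak A$-measurable if the preimage of every Borel subset of $[0,\infty]$ lies in $\mathfrak A$. An amplitude on an abelian category $\mathcal{A}$ is a function $\alpha\colon\operatorname{ob}\mathcal{A}\to[0,\infty]$ with $\alpha(0)=0$, $\alpha(A)\le\alpha(B)$, $\alpha(C)\le\alpha(B)$ and $\alpha(B)\le\alpha(A)+\alpha(C)$ for every short exact sequence $0\to A\to B\to C\to0$. *)

(* Defs.v *)
From HB Require Import structures.
From mathcomp Require Import all_boot all_order all_algebra.
From mathcomp Require Import all_classical all_reals all_analysis measurable_realfun.
Set Implicit Arguments. Unset Strict Implicit. Unset Printing Implicit Defensive.
Import Order.TTheory GRing.Theory Num.Theory.
Local Open Scope classical_set_scope.
Local Open Scope ring_scope.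

Definition is_algebra (T : Type) (A : set (set T)) : Prop :=
  [/\ A set0, (forall U, A U -> A (~` U)) & (forall U V, A U -> A V -> A (U `|` V))].

Definition gen_algebra (T : Type) (G : set (set T)) : set (set T) :=
  fun U => forall B : set (set T), is_algebra B -> G `<=` B -> B U.

Definition upset (d : Order.disp_t) (Q : porderType d) (U : set Q) : Prop :=
  forall u q : Q, U u -> (u <= q)%O -> U q.

Definition X_Up (d : Order.disp_t) (Q : porderType d) (X : set (set Q)) : set (set Q) :=
  gen_algebra (fun U => X U /\ upset U).

Definition measurable_wrt (R : realType) (T : Type) (A : set (set T))
  (g : T -> \bar R) : Prop :=
  forall B : set (\bar R), measurable B -> B `<=` [set x | (0 <= x)%E] ->
    A (g @^-1` B).

Record pmod (K : fieldType) (d : Order.disp_t) (Q : porderType d) := PMod {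
  pm_obj : Q -> vectType K;
  pm_map : forall p q : Q, (p <= q)%O -> 'Hom(pm_obj p, pm_obj q);
  pm_id : forall (p : Q) (h : (p <= p)%O), pm_map h = \1%VF;
  pm_comp : forall (p q r : Q) (hpq : (p <= q)%O) (hqr : (q <= r)%O) (hpr : (p <= r)%O),
      pm_map hpr = (pm_map hqr \o pm_map hpq)%VF
}.

Definition pmod_iso (K : fieldType) (d : Order.disp_t) (Q : porderType d)
  (M N : pmod K Q) : Prop :=
  exists (phi : forall q, 'Hom(pm_obj M q, pm_obj N q))
         (psi : forall q, 'Hom(pm_obj N q, pm_obj M q)),
    [/\ forall q, (psi q \o phi q)%VF = \1%VF,
        forall q, (phi q \o psi q)%VF = \1%VF
      & forall (p q : Q) (h : (p <= q)%O),
          (phi q \o pm_map M h)%VF = (pm_map N h \o phi p)%VF].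

Definition monotone_map (d d' : Order.disp_t) (Q : porderType d) (P : porderType d')
  (e : Q -> P) : Prop := forall x y : Q, (x <= y)%O -> (e x <= e y)%O.

Section Pullback.
Variables (K : fieldType) (d d' : Order.disp_t) (Q : porderType d) (P : porderType d').
Variables (e : Q -> P) (he : monotone_map e) (N : pmod K P).

Lemma pullback_id (p : Q) (h : (p <= p)%O) : pm_map N (he h) = \1%VF.
Proof. exact: pm_id. Qed.

Lemma pullback_comp (p q r : Q) (hpq : (p <= q)%O) (hqr : (q <= r)%O) (hpr : (p <= r)%O) :
  pm_map N (he hpr) = (pm_map N (he hqr) \o pm_map N (he hpq))%VF.
Proof. exact: pm_comp. Qed.

Definition pmod_pullback : pmod K Q :=
  @PMod K d Q (fun q => pm_obj N (e q)) (fun p q h => pm_map N (he h))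
    pullback_id pullback_comp.
End Pullback.

Definition fin_encoded_pmod (K : fieldType) (d : Order.disp_t) (Q : porderType d)
  (X : set (set Q)) (M : pmod K Q) : Prop :=
  exists (dP : Order.disp_t) (P : finPOrderType dP) (e : Q -> P) (he : monotone_map e),
    (forall p : P, X (e @^-1` [set p])) /\
    exists N : pmod K P, pmod_iso M (pmod_pullback he N).

Definition hilbert (R : realType) (K : fieldType) (d : Order.disp_t) (Q : porderType d)
  (M : pmod K Q) : Q -> \bar R :=
  fun q => ((\dim (fullv : {vspace pm_obj M q}))%:R)%:E.

Record precat := PreCat {
  cobj :> Type;
  chom : cobj -> cobj -> zmodType;
  cid : forall a, chom a a;
  ccomp : forall a b c, chom b c -> chom a b -> chom a c;
  ccompA : forall a b c e (f : chom c e) (g : chom b c) (h : chom a b),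
      ccomp f (ccomp g h) = ccomp (ccomp f g) h;
  ccomp1l : forall a b (f : chom a b), ccomp (cid b) f = f;
  ccomp1r : forall a b (f : chom a b), ccomp f (cid a) = f;
  ccompDl : forall a b c (f g : chom b c) (h : chom a b),
      ccomp (f + g) h = ccomp f h + ccomp g h;
  ccompDr : forall a b c (f : chom b c) (g h : chom a b),
      ccomp f (g + h) = ccomp f g + ccomp f h
}.

Section AbelianDefs.
Variable C : precat.

Definition is_zero_obj (z : C) : Prop :=
  (forall a (f g : chom a z), f = g) /\ (forall a (f g : chom z a), f = g).

Definition is_biproduct (a b c : C) (p1 : chom c a) (p2 : chom c b)
  (i1 : chom a c) (i2 : chom b c) : Prop :=
  [/\ ccomp p1 i1 = cid a, ccomp p2 i2 = cid b, ccomp p1 i2 = 0, ccomp p2 i1 = 0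
    & ccomp i1 p1 + ccomp i2 p2 = cid c].

Definition is_mono (a b : C) (f : chom a b) : Prop :=
  forall x (g h : chom x a), ccomp f g = ccomp f h -> g = h.

Definition is_epi (a b : C) (f : chom a b) : Prop :=
  forall x (g h : chom b x), ccomp g f = ccomp h f -> g = h.

Definition is_kernel (a b k : C) (f : chom a b) (m : chom k a) : Prop :=
  ccomp f m = 0 /\
  forall x (g : chom x a), ccomp f g = 0 -> exists! u : chom x k, ccomp m u = g.

Definition is_cokernel (a b k : C) (f : chom a b) (c : chom b k) : Prop :=
  ccomp c f = 0 /\
  forall x (g : chom b x), ccomp g f = 0 -> exists! u : chom k x, ccomp u c = g.

Definition is_abelian : Prop :=
  [/\ (exists z : C, is_zero_obj z),
      (forall a b : C, exists (c : C) (p1 : chom c a) (p2 : chom c b) i1 i2,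
        is_biproduct p1 p2 i1 i2),
      (forall (a b : C) (f : chom a b), exists (k : C) (m : chom k a), is_kernel f m)
    & (forall (a b : C) (f : chom a b), exists (k : C) (c : chom b k), is_cokernel f c)]
  /\ (forall (a b : C) (f : chom a b), is_mono f ->
        exists (c : C) (g : chom b c), is_kernel g f)
  /\ (forall (a b : C) (f : chom a b), is_epi f ->
        exists (k : C) (g : chom k a), is_cokernel g f).

Definition short_exact (a b c : C) (f : chom a b) (g : chom b c) : Prop :=
  [/\ is_mono f, is_epi g & is_kernel g f].

Definition amplitude (R : realType) (alpha : C -> \bar R) : Prop :=
  [/\ forall a : C, (0 <= alpha a)%E,
      forall z : C, is_zero_obj z -> alpha z = 0%E
    & forall (a b c : C) (f : chom a b) (g : chom b c), short_exact f g ->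
        [/\ (alpha a <= alpha b)%E, (alpha c <= alpha b)%E
          & (alpha b <= alpha a + alpha c)%E]].
End AbelianDefs.

Record cfunctor (C : precat) (d : Order.disp_t) (Q : porderType d) := CFun {
  cf_obj : Q -> C;
  cf_map : forall p q : Q, (p <= q)%O -> chom (cf_obj p) (cf_obj q);
  cf_id : forall (p : Q) (h : (p <= p)%O), cf_map h = cid _;
  cf_comp : forall (p q r : Q) (hpq : (p <= q)%O) (hqr : (q <= r)%O) (hpr : (p <= r)%O),
      cf_map hpr = ccomp (cf_map hqr) (cf_map hpq)
}.

Definition cfun_iso (C : precat) (d : Order.disp_t) (Q : porderType d)
  (F G : cfunctor C Q) : Prop :=
  exists (phi : forall q, chom (cf_obj F q) (cf_obj G q))
         (psi : forall q, chom (cf_obj G q) (cf_obj F q)),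
    [/\ forall q, ccomp (psi q) (phi q) = cid _,
        forall q, ccomp (phi q) (psi q) = cid _
      & forall (p q : Q) (h : (p <= q)%O),
          ccomp (phi q) (cf_map F h) = ccomp (cf_map G h) (phi p)].

Section CPullback.
Variables (C : precat) (d d' : Order.disp_t) (Q : porderType d) (P : porderType d').
Variables (e : Q -> P) (he : monotone_map e) (N : cfunctor C P).

Lemma cpullback_id (p : Q) (h : (p <= p)%O) : cf_map N (he h) = cid _.
Proof. exact: cf_id. Qed.

Lemma cpullback_comp (p q r : Q) (hpq : (p <= q)%O) (hqr : (q <= r)%O) (hpr : (p <= r)%O) :
  cf_map N (he hpr) = ccomp (cf_map N (he hqr)) (cf_map N (he hpq)).
Proof. exact: cf_comp. Qed.

Definition cfun_pullback : cfunctor C Q :=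
  @CFun C d Q (fun q => cf_obj N (e q)) (fun p q h => cf_map N (he h))
    cpullback_id cpullback_comp.
End CPullback.

Definition fin_encoded_cfun (C : precat) (d : Order.disp_t) (Q : porderType d)
  (X : set (set Q)) (F : cfunctor C Q) : Prop :=
  exists (dP : Order.disp_t) (P : finPOrderType dP) (e : Q -> P) (he : monotone_map e),
    (forall p : P, X (e @^-1` [set p])) /\
    exists N : cfunctor C P, cfun_iso F (cfun_pullback he N).

(* Main.v *)
Require Import Defs.
From HB Require Import structures.
From mathcomp Require Import all_boot all_order all_algebra.
From mathcomp Require Import all_classical all_reals all_analysis measurable_realfun.
Import Order.TTheory GRing.Theory Num.Theory.
Local Open Scope classical_set_scope.
Local Open Scope ring_scope.
Lemma algI (T : Type) (B : set (set T)) U V : is_algebra B -> B U -> B V -> B (U `&` V).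
Proof.
case=> _ hC hU bU bV; rewrite -[U `&` V]setCK setCI; apply/hC/hU; exact: hC.
Qed.

Lemma alg_preim (T : Type) (P : finType) (e : T -> P) (B : set (set T)) :
  is_algebra B -> (forall p, B (e @^-1` [set p])) -> forall S : set P, B (e @^-1` S).
Proof.
move=> hB hf S.
have H : forall s : seq P, B (e @^-1` [set p | p \in s]).
  elim=> [|p s IH].
    rewrite (_ : _ @^-1` _ = set0); first by case: hB.
    by apply/seteqP; split => x //=; rewrite in_nil.
  rewrite (_ : _ @^-1` _ = e @^-1` [set p] `|` e @^-1` [set p | p \in s]).
    by case: hB => _ _; apply.
  apply/seteqP; split => x /=; rewrite in_cons.
    by case/orP => [/eqP ->|]; [left|right].
  by case => [->|->]; rewrite ?eqxx ?orbT.
rewrite (_ : S = [set p | p \in [seq p <- enum P | `[< S p >]]]); first exact: H.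
apply/seteqP; split => x /=; rewrite mem_filter mem_enum andbT.
  by move=> Sx; apply/asboolP.
by move/asboolP.
Qed.

Lemma fiber_in (d : Order.disp_t) (Q : porderType d) dP (P : finPOrderType dP)
  (e : Q -> P) (he : monotone_map e) (A X : set (set Q)) :
  is_algebra A -> is_algebra X -> (forall p : P, X (e @^-1` [set p])) ->
  (forall U : set Q, upset U -> X U -> A U) -> forall S : set P, A (e @^-1` S).
Proof.
move=> hA hX hfib hup; apply: alg_preim => // p.
have up1 : upset (e @^-1` [set p' | (p <= p')%O]).
  by move=> u q /= pu uq; apply: le_trans pu (he _ _ uq).
have up2 : upset (e @^-1` [set p' | (p < p')%O]).
  by move=> u q /= pu uq; apply: lt_le_trans pu (he _ _ uq).
have XS : forall S : set P, X (e @^-1` S) by exact: alg_preim.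
rewrite (_ : _ @^-1` _ = e @^-1` [set p' | (p <= p')%O] `&` ~` (e @^-1` [set p' | (p < p')%O])).
  apply: algI => //; first exact: hup.
  by case: hA => _ hC _; apply/hC/hup.
apply/seteqP; split => x /=.
  by move=> ->; rewrite lexx ltxx.
case=> h1 h2; apply/eqP; rewrite eq_sym; apply/negPn/negP => hne; apply: h2; by rewrite lt_neqAle hne h1.
Qed.
Lemma dim_le_of_retr (K : fieldType) (V W : vectType K) (f : 'Hom(V, W)) (g : 'Hom(W, V)) :
  (g \o f)%VF = \1%VF -> (\dim (fullv : {vspace V}) <= \dim (fullv : {vspace W}))%N.
Proof.
move=> gf.
have -> : (fullv : {vspace V}) = ((g \o f)%VF @: fullv)%VS by rewrite gf lim1g.
rewrite limg_comp.
apply: leq_trans (_ : \dim (f @: fullv)%VS <= _)%N.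
  by rewrite -[X in (_ <= X)%N](limg_ker_dim g) leq_addl.
exact/dimvS/subvf.
Qed.

Lemma dim_iso (K : fieldType) (V W : vectType K) (f : 'Hom(V, W)) (g : 'Hom(W, V)) :
  (g \o f)%VF = \1%VF -> (f \o g)%VF = \1%VF ->
  \dim (fullv : {vspace V}) = \dim (fullv : {vspace W}).
Proof.
by move=> h1 h2; apply/eqP; rewrite eqn_leq (dim_le_of_retr _ _ _ _ _ h1) (dim_le_of_retr _ _ _ _ _ h2).
Qed.

Lemma amp_iso (C : precat) (R : realType) (alpha : C -> \bar R) :
  is_abelian C -> amplitude alpha ->
  forall (a b : C) (f : chom a b) (g : chom b a),
  ccomp g f = Defs.cid a -> ccomp f g = Defs.cid b -> alpha a = alpha b.
Proof.
move=> [[[z zz] _ _ _] _] [_ _ hex].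
suff H : forall (a b : C) (f : chom a b) (g : chom b a),
    ccomp g f = Defs.cid a -> ccomp f g = Defs.cid b -> (alpha a <= alpha b)%E.
  by move=> a b f g h1 h2; apply/le_anti; rewrite (H _ _ f g) // (H _ _ g f).
move=> a b f g gf fg.
have mono : is_mono f.
  move=> x u v e.
  by rewrite -(ccomp1l u) -(ccomp1l v) -gf -!ccompA e.
have [] := hex a b z f 0; last by [].
split => //.
- by move=> x u v _; apply: zz.2.
- split; first by apply: zz.1.
  move=> x h _; exists (ccomp g h); split.
    by rewrite ccompA fg ccomp1l.
  by move=> u' e; apply: mono; rewrite ccompA fg ccomp1l.
Qed.
Section Ind.
Variables (K : fieldType) (d : Order.disp_t) (T : porderType d) (f : T -> bool) (hf : monotone_map f).
Definition iobj (q : T) : vectType K := 'rV[K]_(f q).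
Definition imap (p q : T) (h : (p <= q)%O) : 'Hom(iobj p, iobj q) :=
  linfun (mulmxr (pid_mx (f p) : 'M[K]_(f p, f q))).
Lemma imap_id (p : T) (h : (p <= p)%O) : imap _ _ h = \1%VF.
Proof. by apply/lfunP => v; rewrite lfunE id_lfunE /= pid_mx_1 mulmx1. Qed.
Lemma imap_comp (p q r : T) (hpq : (p <= q)%O) (hqr : (q <= r)%O) (hpr : (p <= r)%O) :
  imap _ _ hpr = (imap _ _ hqr \o imap _ _ hpq)%VF.
Proof.
apply/lfunP => v; rewrite comp_lfunE !lfunE /= -mulmxA mul_pid_mx.
have -> : minn (f q) (minn (f p) (f q)) = f p.
  by have := hf _ _ hpq; case: (f p); case: (f q).
by [].
Qed.
Definition indmod : pmod K T := @PMod K d T iobj imap imap_id imap_comp.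
End Ind.

Theorem mainTheorem18 (R : realType) (K : fieldType) (d : Order.disp_t)
  (Q : porderType d) (A X : set (set Q)) (hA : is_algebra A) (hX : is_algebra X) :
  ((forall M : pmod K Q, fin_encoded_pmod X M -> measurable_wrt A (hilbert R M)) <->
   (forall U : set Q, upset U -> X U -> A U))
  /\ ((forall U : set Q, upset U -> X U -> A U) <-> X_Up X `<=` A)
  /\ (forall (C : precat) (alpha : C -> \bar R),
        is_abelian C -> amplitude alpha ->
        (forall U : set Q, upset U -> X U -> A U) ->
        forall F : cfunctor C Q, fin_encoded_cfun X F ->
          measurable_wrt A (fun q => alpha (cf_obj F q))).
Proof.
split; [split|split; [split|]].
- move=> H U hU XU.
  pose f (q : Q) : bool := `[< U q >].
  have hf : monotone_map f.
    move=> x y xy; rewrite /f; case: (asboolP (U x)) => Ux //.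
    by rewrite (asboolT (hU _ _ Ux xy)).
  have hid : monotone_map (id : bool -> bool) by [].
  have enc : fin_encoded_pmod X (indmod K _ _ _ hf).
    exists Order.BoolOrder.bool_display, bool, f, hf; split.
      case.
        rewrite (_ : _ @^-1` _ = U) //; apply/seteqP; split => x /=.
          by rewrite /f => /asboolP.
        by move=> Ux; rewrite /f asboolT.
      rewrite (_ : _ @^-1` _ = ~` U); first by case: hX => _ hC _; apply: hC.
      apply/seteqP; split => x /=.
        by rewrite /f => /negbT/asboolPn.
      by move=> Ux; rewrite /f asboolF.
    exists (indmod K _ _ _ hid).
    exists (fun q => \1%VF), (fun q => \1%VF); split => //.
    - by move=> q; rewrite comp_lfun1l.
    - by move=> q; rewrite comp_lfun1l.
    - by move=> p q h; rewrite comp_lfun1l comp_lfun1r.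
  have := H _ enc [set 1%E] (emeasurable_set1 _).
  have -> : hilbert R (indmod K _ _ _ hf) @^-1` [set 1%E] = U.
    apply/seteqP; split => x /=; rewrite /hilbert /= dimvf dim_matrix /f.
      by case: (asboolP (U x)) => //= _ /eqP; rewrite eqe eq_sym oner_eq0.
    by move=> Ux; rewrite asboolT.
  by apply => x /= ->; rewrite lee01.
- move=> H M [dP [P [e [he [hfib [N [phi [psi [h1 h2 _]]]]]]]]] B _ _.
  have -> : hilbert R M @^-1` B =
      e @^-1` [set p | B (((\dim (fullv : {vspace pm_obj N p}))%:R)%:E)].
    apply/seteqP; split => q /=;
      by rewrite /hilbert (dim_iso _ _ _ _ _ (h1 q) (h2 q)).
  exact: (@fiber_in _ _ _ _ e he A X hA hX hfib H).
- move=> H U XU; apply: XU hA _ => V [XV uV]; exact: H.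
- move=> H U uU XU; apply: H => B _ hG; exact: hG.
- move=> C alpha hC hal H F [dP [P [e [he [hfib [N [phi [psi [h1 h2 _]]]]]]]]] B _ _.
  have -> : (fun q => alpha (cf_obj F q)) @^-1` B =
      e @^-1` [set p | B (alpha (cf_obj N p))].
    apply/seteqP; split => q /=;
      by rewrite (amp_iso _ _ _ hC hal _ _ _ _ (h1 q) (h2 q)).
  exact: (@fiber_in _ _ _ _ e he A X hA hX hfib H).
Qed.
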